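(* Let $G=(V,E)$ be a finite, connected, undirected graph with $n\ge2$ vertices and let $0<r<1$. For any $\epsilon\in(0,1)$ and any $t\ge\frac{1}{1-r}n^3/\epsilon$, the Moran process on $G$ with fitness $r$ (started from a single mutant) reaches absorption within $t$ steps with probability at least $1-\epsilon$.
   Context: The Moran process on $G$ with mutant fitness $r>0$ is the Markov chain $(X_i)_{i\ge0}$ whose state $X_i\subseteq V$ is the set of vertices occupied by mutants; every other vertex is occupied by a non-mutant of fitness $1$. Write $W(S)=r|S|+|V\setminus S|$ for the total fitness. Given $X_i=S$, one step is: choose a vertex $x$ with probability $r/W(S)$ if $x\in S$ and $1/W(S)$ if $x\notin S$; then choose a neighbour $y$ of $x$ uniformly at random; set $X_{i+1}=S\cup\{y\}$ if $x\in S$ and $X_{i+1}=S\setminus\{y\}$ if $x\notin S$. The process starts from $X_0=\{x\}$ for a single vertex $x$. Absorption means reaching $X_i=\emptyset$ or $X_i=V$. *)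

(* Defs.v *)
From HB Require Import structures.
From mathcomp Require Import all_boot all_order all_algebra.
Set Implicit Arguments. Unset Strict Implicit. Unset Printing Implicit Defensive.
Import Order.TTheory GRing.Theory Num.Theory.
Local Open Scope ring_scope.

Section Moran.
Variables (R : realFieldType) (V : finType) (e : rel V) (r : R).

Definition fit (S : {set V}) (x : V) : R := if x \in S then r else 1.

Definition Wfit (S : {set V}) : R := \sum_(x : V) fit S x.

Definition deg (x : V) : nat := #|[set y | e x y]|.

(* result of x reproducing onto neighbour y *)
Definition moran_update (S : {set V}) (x y : V) : {set V} :=
  if x \in S then y |: S else S :\ y.

Definition moran_trans (S S' : {set V}) : R :=
  \sum_(x : V) \sum_(y : V | e x y)
     (fit S x / Wfit S) * (deg x)%:R^-1 * (moran_update S x y == S')%:R.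

Definition absorbing (S : {set V}) : bool := (S == set0) || (S == setT).

(* surv x0 t S = probability that the process started from {x0} has not
   been absorbed in any of the steps 0..t and X_t = S *)
Fixpoint surv (x0 : V) (t : nat) : {set V} -> R :=
  match t with
  | 0 => fun S => (S == [set x0])%:R * (~~ absorbing S)%:R
  | t'.+1 => fun S' =>
      (~~ absorbing S')%:R * \sum_(S : {set V}) surv x0 t' S * moran_trans S S'
  end.

Definition absorb_within (x0 : V) (t : nat) : R :=
  1 - \sum_(S : {set V}) surv x0 t S.

End Moran.

(* Main.v *)
Require Import Defs.
From HB Require Import structures.
From mathcomp Require Import all_boot all_order all_algebra.
From mathcomp Require Import ring lra.
Import Order.TTheory GRing.Theory Num.Theory.
Local Open Scope ring_scope.

Section Proof.
Variables (R : realFieldType) (V : finType) (e : rel V).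
Hypotheses (e_sym : symmetric e) (e_irr : irreflexive e)
  (e_conn : forall x y : V, connect e x y) (hn : (2 <= #|V|)%N).
Variables (r : R).
Hypotheses (hr0 : 0 < r) (hr1 : r < 1).

Local Notation d x := ((deg e x)%:R : R).
Local Notation n := (#|V|%:R : R).

Lemma deg_gt0 x : (0 < deg e x)%N.
Proof.
have [y hy] : exists y, y != x.
  apply/existsP; rewrite -negb_forall; apply/negP => /forallP H.
  have : (#|V| <= 1)%N.
    rewrite -(card1 x); apply: subset_leq_card; apply/subsetP => z _.
    by rewrite inE; apply: H.
  by case: #|V| hn => [|[|]].
have /connectP [p hp hl] := e_conn x y.
case: p hp hl => [_ hl | z p /= /andP [hz _] _]; first by rewrite hl eqxx in hy.
by apply/card_gt0P; exists z; rewrite inE.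
Qed.

Lemma d_gt0 x : 0 < d x. Proof. by rewrite ltr0n deg_gt0. Qed.
Lemma d_le x : d x <= n. Proof. by rewrite ler_nat /deg max_card. Qed.

Lemma fit_gt0 (S : {set V}) x : 0 < fit r S x. Proof. by rewrite /fit; case: (x \in S). Qed.
Lemma fit_le1 (S : {set V}) x : fit r S x <= 1. Proof. by rewrite /fit; case: (x \in S) => //; apply: ltW. Qed.

Lemma V0 : (0 < #|V|)%N. Proof. by apply: leq_trans hn. Qed.

Lemma W_gt0 (S : {set V}) : 0 < Wfit r S.
Proof.
have [x _] : exists x : V, x \in V by apply/card_gt0P; exact V0.
rewrite /Wfit (bigD1 x) //=; apply: ltr_wpDr; last exact: fit_gt0.
by apply: sumr_ge0 => y _; apply: ltW; apply: fit_gt0.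
Qed.

Lemma W_le (S : {set V}) : Wfit r S <= n.
Proof.
rewrite /Wfit -sum1_card natr_sum; apply: ler_sum => x _; exact: fit_le1.
Qed.

Lemma trans_sum (S : {set V}) (f : {set V} -> R) :
  \sum_S' moran_trans e r S S' * f S' =
  \sum_x \sum_(y | e x y) fit r S x / Wfit r S * (d x)^-1 * f (moran_update S x y).
Proof.
rewrite /moran_trans.
under eq_bigr => S' _ do rewrite big_distrl /= ; rewrite exchange_big /=.
apply: eq_bigr => x _.
under eq_bigr => S' _ do rewrite big_distrl /= ; rewrite exchange_big /=.
apply: eq_bigr => y _.
rewrite (bigD1 (moran_update S x y)) // eqxx mulr1 big1 /= ?addr0 // => S' hS'.
by rewrite eq_sym (negbTE hS') mulr0 mul0r.
Qed.

Lemma sum_nb x (c : R) : \sum_(y | e x y) c = c * d x.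
Proof.
rewrite (eq_bigl (fun y => y \in [set y | e x y])); last by move=> y; rewrite inE.
by rewrite sumr_const mulr_natr.
Qed.

Lemma trans_sum1 (S : {set V}) : \sum_S' moran_trans e r S S' = 1.
Proof.
have := trans_sum S (fun _ => 1); under eq_bigr => S' _ do rewrite mulr1.
move=> ->; under eq_bigr => x _ do rewrite sum_nb.
rewrite -[RHS](divff (lt0r_neq0 (W_gt0 S))) {3}/Wfit mulr_suml.
apply: eq_bigr => x _.
rewrite mulr1 -mulrA mulVf ?mulr1 ?[_ / _]mulrC //; exact: lt0r_neq0 (d_gt0 x).
Qed.

Definition phi (S : {set V}) : R := \sum_(z in S) (d z)^-1.

Lemma phi_ge0 S : 0 <= phi S.
Proof. by apply: sumr_ge0 => z _; rewrite invr_ge0 ltW // d_gt0. Qed.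

Definition delta (S : {set V}) x y : R :=
  if x \in S then (y \notin S)%:R / d y else - ((y \in S)%:R / d y).

Lemma phi_upd S x y : phi (moran_update S x y) = phi S + delta S x y.
Proof.
rewrite /moran_update /delta /phi; case: (x \in S); case hy: (y \in S) => /=.
- have -> : y |: S = S by apply/setP => z; rewrite !inE; case: eqP => // ->; rewrite hy.
  by rewrite mul0r addr0.
- by rewrite big_setU1 ?hy //= mul1r addrC.
- rewrite (big_setD1 y hy) /= mul1r; lra.
- have -> : S :\ y = S.
    by apply/setP => z; rewrite !inE; case: eqP => // ->; rewrite hy.
  by rewrite mul0r oppr0 addr0.
Qed.

Definition hh (S : {set V}) x y : R :=
  (x \in S)%:R * (y \notin S)%:R / (Wfit r S * d x * d y).

Lemma hh_ge0 S x y : 0 <= hh S x y.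
Proof.
rewrite /hh; apply: divr_ge0; first by apply: mulr_ge0; apply: ler0n.
by apply: mulr_ge0; [apply: mulr_ge0|]; apply: ltW; rewrite ?W_gt0 ?d_gt0.
Qed.

Lemma pdelta S x y :
  fit r S x / Wfit r S * (d x)^-1 * delta S x y = r * hh S x y - hh S y x.
Proof.
have hW := lt0r_neq0 (W_gt0 S); have hx := lt0r_neq0 (d_gt0 x);
have hy := lt0r_neq0 (d_gt0 y).
rewrite /hh /delta /fit; case: (x \in S); case: (y \in S) => /=;
  rewrite ?mul0r ?mul1r ?mulr0 ?mul0r ?subr0 ?sub0r; field; 
  by rewrite ?hx ?hy ?hW.
Qed.

Lemma crossing (S : {set V}) : ~~ absorbing S ->
  exists a b, [/\ a \in S, b \notin S & e a b].
Proof.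
rewrite /absorbing negb_or => /andP [h0 hT].
have [a ha] := set0Pn _ h0.
have [b hb] : exists b, b \notin S.
  apply/existsP; rewrite -negb_forall; apply: contra hT => /forallP H.
  by apply/eqP/setP => z; rewrite inE H.
have /connectP [p hp hl] := e_conn a b.
elim: p a ha hp hl => [|z p IH] a ha /=; first by move=> _ hl; rewrite hl ha in hb.
move=> /andP [haz hp] hl.
case hz: (z \in S); first exact: IH hz hp hl.
by exists a, z; rewrite hz.
Qed.

Lemma sum_p1 (S : {set V}) :
  \sum_x \sum_(y | e x y) fit r S x / Wfit r S * (d x)^-1 = 1.
Proof.
have := trans_sum S (fun _ => 1).
under eq_bigr => S' _ do rewrite mulr1.
rewrite trans_sum1 => h; rewrite [RHS]h.
by apply: eq_bigr => x _; apply: eq_bigr => y _; rewrite mulr1.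
Qed.

Lemma drift (S : {set V}) : ~~ absorbing S ->
  \sum_S' moran_trans e r S S' * phi S' <= phi S - (1 - r) / n ^+ 3.
Proof.
move=> hS.
rewrite trans_sum.
under eq_bigr => x _ do under eq_bigr => y _ do rewrite phi_upd mulrDr pdelta.
under eq_bigr => x _ do rewrite big_split /=.
rewrite big_split /=.
under eq_bigr => x _ do rewrite -big_distrl /=.
rewrite -big_distrl /= sum_p1 mul1r.
under eq_bigr => x _ do rewrite big_split /= sumrN -big_distrr /=.
rewrite big_split /= sumrN -big_distrr /=.
set H := \sum_x \sum_(y | e x y) hh S x y.
have -> : \sum_x \sum_(y | e x y) hh S y x = H.
  rewrite /H; under eq_bigr => x _ do rewrite big_mkcond /=.
  rewrite exchange_big /=.
  under [RHS]eq_bigr => x _ do rewrite big_mkcond /=.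
  by apply eq_bigr => x _; apply eq_bigr => y _; rewrite e_sym.
have hn0 : 0 < n by rewrite ltr0n V0.
have hH : 1 / n ^+ 3 <= H.
  have [a [b [ha hb hab]]] := crossing S hS.
  rewrite /H (bigD1 a) //= -[X in X <= _]addr0; apply: lerD; last first.
    by apply: sumr_ge0 => x _; apply: sumr_ge0 => y _; apply: hh_ge0.
  rewrite (bigD1 b) //= -[X in X <= _]addr0; apply: lerD; last first.
    by apply: sumr_ge0 => y _; apply: hh_ge0.
  have -> : hh S a b = (Wfit r S * d a * d b)^-1.
    by rewrite /hh ha hb /= mul1r div1r.
  rewrite div1r lef_pV2 ?posrE; last 2 first.
    by rewrite exprn_gt0.
    by rewrite !mulr_gt0 ?W_gt0 ?d_gt0.
  rewrite !exprS expr0 mulr1 !mulrA.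
  apply: ler_pM; [by rewrite mulr_ge0 // ltW ?W_gt0 ?d_gt0 | by rewrite ltW ?d_gt0 | | exact: d_le].
  apply: ler_pM; [by rewrite ltW ?W_gt0 | by rewrite ltW ?d_gt0 | exact: W_le | exact: d_le].
have : 0 < 1 - r by rewrite subr_gt0.
move: hH; rewrite !mul1r; set m := (n ^+ 3)^-1; rewrite mulrC -/m.
move=> hH h1r; nra.
Qed.

Lemma trans_ge0 (S S' : {set V}) : 0 <= moran_trans e r S S'.
Proof.
apply: sumr_ge0 => x _; apply: sumr_ge0 => y _.
by rewrite !mulr_ge0 ?ler0n ?invr_ge0 ?ler0n // ltW ?fit_gt0 ?W_gt0.
Qed.

Lemma surv_ge0 x0 k S : 0 <= surv e r x0 k S.
Proof.
elim: k S => [|k IH] S /=; first by rewrite mulr_ge0 ?ler0n.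
rewrite mulr_ge0 ?ler0n //; apply: sumr_ge0 => S' _.
by rewrite mulr_ge0 ?IH ?trans_ge0.
Qed.

Lemma surv_abs x0 k S : absorbing S -> surv e r x0 k S = 0.
Proof. by case: k => [|k] /= ->; rewrite ?mulr0 ?mul0r. Qed.

Lemma main_ind x0 k :
  \sum_S surv e r x0 k S * (phi S + (1 - r) / n ^+ 3 * k%:R) <= 1.
Proof.
set c := (1 - r) / n ^+ 3.
elim: k => [|k IH].
  rewrite (bigD1 [set x0]) //= big1 ?addr0 => [|S hS]; last first.
    by rewrite /= (negbTE hS) !mul0r.
  rewrite eqxx mul1r mulr0 addr0 /phi big_set1.
  have h1 : (d x0)^-1 <= 1 by rewrite invf_le1 ?d_gt0 // ler1n deg_gt0.
  case: (~~ absorbing [set x0]) => /=; first by rewrite mul1r.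
  by rewrite mul0r.
apply: le_trans IH.
rewrite /=.
have hb : forall S', 0 <= phi S' + c * k.+1%:R.
  move=> S'; rewrite addr_ge0 ?phi_ge0 // mulr_ge0 ?ler0n //.
  by rewrite /c divr_ge0 ?subr_ge0 ?ltW ?exprn_gt0 ?ltr0n ?V0.
apply: le_trans (_ : _ <= \sum_S' \sum_S surv e r x0 k S * moran_trans e r S S' *
    (phi S' + c * k.+1%:R)) _.
  apply: ler_sum => S' _; rewrite -big_distrl /=.
  case: (~~ absorbing S') => /=; first by rewrite mul1r.
  rewrite !mul0r; apply: mulr_ge0 => //; apply: sumr_ge0 => S _.
  by rewrite mulr_ge0 ?surv_ge0 ?trans_ge0.
rewrite exchange_big /=; apply: ler_sum => S _.
case hS: (absorbing S).
  by rewrite surv_abs // mul0r big1 // => S' _; rewrite !mul0r.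
under eq_bigr => S' _ do rewrite -mulrA.
rewrite -big_distrr /=; apply: ler_wpM2l; first exact: surv_ge0.
under eq_bigr => S' _ do rewrite mulrDr.
rewrite big_split /= -big_distrl /= trans_sum1 mul1r.
have := drift S (negbT hS); rewrite -/c => hd.
rewrite -natr1 mulrDr mulr1.
lra.
Qed.
End Proof.

Theorem corollary6 (R : realFieldType) (V : finType) (e : rel V)
  (e_sym : symmetric e) (e_irr : irreflexive e)
  (e_conn : forall x y : V, connect e x y)
  (hn : (2 <= #|V|)%N)
  (r : R) (hr0 : 0 < r) (hr1 : r < 1)
  (eps : R) (he0 : 0 < eps) (he1 : eps < 1)
  (t : nat) (ht : (#|V| ^ 3)%:R / ((1 - r) * eps) <= t%:R :> R)
  (x0 : V) :
  1 - eps <= absorb_within e r x0 t.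
Proof.
have := @main_ind R V e e_sym e_conn hn r hr0 hr1 x0 t.
set n := (#|V|%:R : R).
set c := (1 - r) / n ^+ 3.
set s := \sum_S surv e r x0 t S.
move=> hm.
have hs : c * t%:R * s <= 1.
  apply: le_trans hm; rewrite /s big_distrr /=; apply: ler_sum => S _.
  rewrite mulrC; apply: ler_wpM2l; first exact: (@surv_ge0 _ _ e hn _ hr0).
  by rewrite -{1}[c * _]add0r lerD2r (@phi_ge0 _ _ e e_conn hn S).
have hn0 : 0 < n by rewrite ltr0n; apply: leq_trans hn.
have h1r : 0 < 1 - r by rewrite subr_gt0.
have hn3 : 0 < n ^+ 3 by rewrite exprn_gt0.
move: ht; rewrite natrX -/n ler_pdivrMr ?mulr_gt0 // => ht.
have hs0 : 0 <= s by apply: sumr_ge0 => S _; apply: (@surv_ge0 _ _ e hn _ hr0).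
rewrite /absorb_within -/s lerD2l lerN2.
have h2 : (1 - r) * t%:R * s <= n ^+ 3.
  have -> : (1 - r) * t%:R * s = c * t%:R * s * n ^+ 3.
    by rewrite /c; field; rewrite lt0r_neq0.
  by rewrite -[X in _ <= X]mul1r ler_wpM2r // ltW.
have ht0 : 0 < (1 - r) * t%:R.
  rewrite mulr_gt0 // ltr0n lt0n; apply/eqP => t0.
  by move: ht; rewrite t0 mul0r => /(lt_le_trans hn3); rewrite ltxx.
rewrite -(ler_pM2l ht0).
apply: le_trans h2 _.
by rewrite (le_trans ht) // mulrCA mulrA.
Qed.
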